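(* For all integers $3\le s<t$ there is a positive constant $C$ depending only on $s$ such that for every integer $n\ge 2$, $$ f_{s-1,t-1}^{(2)}\big(\lfloor \sqrt{\log n}\rfloor\big) \le f_{s,t}^{(3)}(n) \le C\log n . $$
   Context: For integers $k\le s<t$ and $n\ge 0$, $f_{s,t}^{(k)}(n)$ is defined as $$ f_{s,t}^{(k)}(n)=\min_{\mathcal{G}} \max\{ |W| : W\subseteq V(\mathcal{G}) \text{ and the induced subhypergraph } \mathcal{G}[W] \text{ contains no copy of } K_s^{(k)}\}, $$ where the minimum is over all $k$-uniform hypergraphs $\mathcal{G}$ on $n$ vertices containing no copy of $K_t^{(k)}$, and $K_r^{(k)}$ denotes the complete $k$-uniform hypergraph on $r$ vertices (so for $k=2$, $K_r^{(2)}=K_r$ and $f^{(2)}_{s,t}$ concerns graphs). All logarithms are natural logarithms. *)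

(* Defs.v *)
From HB Require Import structures.
From mathcomp Require Import all_boot all_order all_algebra.
Set Implicit Arguments. Unset Strict Implicit. Unset Printing Implicit Defensive.

Definition uniform (n k : nat) (E : {set {set 'I_n}}) : bool :=
  [forall e in E, #|e| == k].

Definition is_clique (n k : nat) (E : {set {set 'I_n}}) (X : {set 'I_n}) : bool :=
  [forall e : {set 'I_n}, ((e \subset X) && (#|e| == k)) ==> (e \in E)].

Definition has_K (n k r : nat) (E : {set {set 'I_n}}) (W : {set 'I_n}) : bool :=
  [exists X : {set 'I_n}, [&& X \subset W, #|X| == r & is_clique k E X]].

Definition indep_num (n k s : nat) (E : {set {set 'I_n}}) : nat :=
  \max_(W : {set 'I_n} | ~~ has_K k s E W) #|W|.

(* f^{(k)}_{s,t}(n): minimum over K_t^{(k)}-free k-uniform hypergraphs on n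
   vertices.  (The default value n of the min is never relevant: indep_num is
   always <= n, and the family is nonempty when t > k.) *)
Definition f (k s t n : nat) : nat :=
  \big[minn/n]_(E : {set {set 'I_n}} | uniform k E && ~~ has_K k t E setT)
     indep_num k s E.

(* Main.v *)
Require Import Defs.
From HB Require Import structures.
From mathcomp Require Import all_boot all_order all_algebra.
From mathcomp Require Import zify.
Set Implicit Arguments. Unset Strict Implicit. Unset Printing Implicit Defensive.

Section Count.
Variables (T V : finType).

Definition agree (D : {set T}) (g f : {ffun T -> V}) := [forall x in D, f x == g x].

Lemma fiber_card (D : {set T}) (h : {ffun T -> V}) :
  #|[pred f : {ffun T -> V} | [forall x in ~: D, f x == h x]]| = #|V| ^ #|D|.
Proof.
pose F := fun x : T => if x \in D then (predT : pred V) else pred1 (h x).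
have -> : #|[pred f : {ffun T -> V} | [forall x in ~: D, f x == h x]]| =
          #|(family F : simpl_pred {ffun T -> V})|.
  apply: eq_card => f; rewrite !inE; apply/forall_inP/familyP => H x.
    rewrite /F; case: ifP => xD //; rewrite inE; apply: H; by rewrite inE xD.
  rewrite inE => xD; have := H x; rewrite /F; move/negbTE: xD => ->.
  by rewrite inE.
rewrite card_family foldrE big_map big_enum /=.
rewrite (eq_bigr (fun x => if x \in D then #|V| else 1)); last first.
  move=> x _; rewrite /F; case: ifP => _; first by apply: eq_card.
  exact: card1.
by rewrite -big_mkcond /= prod_nat_const.
Qed.

Lemma split_count (D : {set T}) (g : {ffun T -> V}) (P : pred {ffun T -> V}) :
  (forall f f' : {ffun T -> V}, (forall x, x \notin D -> f x = f' x) -> P f = P f') ->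
  #|[pred f | P f && agree D g f]| * #|V| ^ #|D| = #|P|.
Proof.
move=> HP.
pose r := fun f : {ffun T -> V} => [ffun x => if x \in D then g x else f x].
have rout f x : x \notin D -> r f x = f x by rewrite /r ffunE => /negbTE ->.
rewrite -[in RHS]sum1_card.
rewrite (partition_big r [pred h | P h && agree D g h]); last first.
  move=> f Pf; rewrite inE /=; apply/andP; split.
    by rewrite (HP _ f) // => x xD; rewrite rout.
  by apply/forall_inP => x xD; rewrite /r ffunE xD.
rewrite -sum_nat_const /=; symmetry.
apply: eq_big => [h|h /andP[Ph Ah]]; first by rewrite inE.
rewrite sum1_card -(fiber_card D h); apply: eq_card => f; rewrite !inE.
apply/andP/forall_inP => [[Pf /eqP rfh] x | H].
  rewrite inE => xD; by rewrite -rfh rout.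
have rfh : r f = h.
  apply/ffunP => x; rewrite /r ffunE; case: ifP => xD.
    by move/forall_inP: Ah => /(_ x xD) /eqP.
  by apply/eqP/H; rewrite inE xD.
split; last by rewrite rfh.
by rewrite unfold_in (HP _ h) // => x xD; apply/eqP/H; rewrite inE.
Qed.

Lemma one_block (D : {set T}) (g : {ffun T -> V}) (P : pred {ffun T -> V}) d :
  (forall f f' : {ffun T -> V}, (forall x, x \notin D -> f x = f' x) -> P f = P f') ->
  0 < #|V| -> #|D| <= d ->
  #|[pred f | P f && ~~ agree D g f]| * #|V| ^ d <= #|P| * (#|V| ^ d).-1.
Proof.
move=> HP V0 Dd.
have S := split_count g HP.
have C : #|[pred f | P f && agree D g f]| + #|[pred f | P f && ~~ agree D g f]| = #|P|.
  rewrite -(cardID [pred f | agree D g f] P); congr (_ + _); apply: eq_card => f;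
  by rewrite !inE /= andbC.
set a := #|[pred f | P f && agree D g f]| in S C *.
set c := #|[pred f | P f && ~~ agree D g f]| in C *.
set p := #|P| in S C *.
have -> : #|V| ^ d = #|V| ^ #|D| * #|V| ^ (d - #|D|) by rewrite -expnD subnKC.
set x := #|V| ^ #|D|. set y := #|V| ^ (d - #|D|).
have x0 : 0 < x by rewrite expn_gt0 V0.
have y0 : 0 < y by rewrite expn_gt0 V0.
have Hc : c = a * (x - 1) by rewrite mulnBr muln1 S -C addKn.
rewrite Hc -S.
have -> : (x * y).-1 = x * y - 1 by rewrite subn1.
rewrite -/x -!mulnA leq_mul2l; apply/orP; right.
rewrite mulnBl mul1n mulnBr muln1 leq_sub2l // leq_pmulr //.
Qed.

Lemma avoid_count (I : eqType) (r : seq I) (D : I -> {set T})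
    (g : I -> {ffun T -> V}) d :
  0 < #|V| -> uniq r -> {in r &, forall i j, i != j -> [disjoint D i & D j]} ->
  (forall i, #|D i| <= d) ->
  #|[pred f : {ffun T -> V} | all (fun i => ~~ agree (D i) (g i) f) r]|
     * (#|V| ^ d) ^ (size r) <= (#|V| ^ d).-1 ^ (size r) * #|V| ^ #|T|.
Proof.
move=> V0; elim: r => [|i r IH] /=.
  move=> _ _ _; rewrite !expn0 !muln1 mul1n -card_ffun.
  by apply: subset_leq_card; apply/subsetP => f.
move=> /andP[ir ur] Hdis Hd.
have IH' := IH ur.
have {IH'}IH' := IH' _ Hd.
have {IH'}IH' : #|[pred f | all (fun i : I => ~~ agree (D i) (g i) f) r]| *
  (#|V| ^ d) ^ size r <= (#|V| ^ d).-1 ^ size r * #|V| ^ #|T|.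
  by apply: IH' => a b ar br; apply: Hdis; rewrite inE ?ar ?br orbT.
set P := [pred f : {ffun T -> V} | all (fun i => ~~ agree (D i) (g i) f) r].
have HP : forall f f' : {ffun T -> V}, (forall x, x \notin D i -> f x = f' x) -> P f = P f'.
  move=> f f' E; rewrite !inE; apply: eq_in_all => j jr; congr (~~ _).
  have dj : [disjoint D i & D j].
    apply: Hdis; rewrite ?inE ?jr ?orbT ?eqxx //.
    by apply: contraNneq ir => ->.
  apply: eq_forallb => x; case xD: (x \in D j) => //=; rewrite E //.
  by move: dj; rewrite disjoint_sym => /disjointFr ->.
have B := one_block (g i) HP V0 (Hd i).
have -> : #|[pred f : {ffun T -> V} | ~~ agree (D i) (g i) f && all (fun i => ~~ agree (D i) (g i) f) r]|
  = #|[pred f | P f && ~~ agree (D i) (g i) f]|.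
  by apply: eq_card => f; rewrite !inE andbC.
set c := #|[pred f | P f && ~~ agree (D i) (g i) f]| in B *.
set p := #|P| in B IH'.
set q := #|V| ^ d in B IH' *.
rewrite !expnS.
have : c * q * q ^ size r <= p * q.-1 * q ^ size r by rewrite leq_mul2r B orbT.
have : p * q ^ size r * q.-1 <= q.-1 ^ size r * #|V| ^ #|T| * q.-1 by rewrite leq_mul2r IH' orbT.
move=> H1 H2; rewrite mulnA; apply: leq_trans H2 _.
have -> : p * q.-1 * q ^ size r = p * q ^ size r * q.-1 by rewrite mulnAC.
have -> : q.-1 * q.-1 ^ size r * #|V| ^ #|T| = q.-1 ^ size r * #|V| ^ #|T| * q.-1 by rewrite [RHS]mulnC mulnA.
exact: H1.
Qed.

End Count.


Lemma card3 (T : finType) (a b c : T) : a != b -> a != c -> b != c ->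
  #|[set a; b; c]| = 3.
Proof.
move=> ab ac bc; rewrite -setUA cardsU1 cards2 bc !inE negb_or ab ac.
by [].
Qed.

Lemma set3_perm (T : finType) (x y z : T) :
  [set x; y; z] = [set y; x; z] /\ [set x; y; z] = [set x; z; y] /\
  [set x; y; z] = [set z; y; x].
Proof.
split; [|split]; apply/setP => w; rewrite !inE;
by case: (w == x); case: (w == y); case: (w == z).
Qed.

Lemma sort3 N (x y z : 'I_N) : x != y -> x != z -> y != z ->
  exists a b c : 'I_N, [/\ a < b, b < c & [set x; y; z] = [set a; b; c]].
Proof.
move=> xy xz yz.
have [P1 [P2 P3]] := set3_perm x y z.
have [P4 [P5 P6]] := set3_perm y x z.
have [P7 [P8 P9]] := set3_perm x z y.
case: (ltngtP x y) => [lxy|lyx|exy]; last by rewrite (ord_inj exy) eqxx in xy.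
- case: (ltngtP y z) => [lyz|lzy|eyz]; last by rewrite (ord_inj eyz) eqxx in yz.
  + by exists x, y, z.
  + case: (ltngtP x z) => [lxz|lzx|exz]; last by rewrite (ord_inj exz) eqxx in xz.
    * by exists x, z, y; split => //; rewrite P2.
    * exists z, x, y; split => //; rewrite P2.
      apply/setP => w; rewrite !inE; by case: (w == x); case: (w == y); case: (w == z).
- case: (ltngtP x z) => [lxz|lzx|exz]; last by rewrite (ord_inj exz) eqxx in xz.
  + by exists y, x, z; split => //; rewrite P1.
  + case: (ltngtP y z) => [lyz|lzy|eyz]; last by rewrite (ord_inj eyz) eqxx in yz.
    * exists y, z, x; split => //.
      apply/setP => w; rewrite !inE; by case: (w == x); case: (w == y); case: (w == z).
    * by exists z, y, x; split => //; rewrite P3.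
Qed.

Lemma triple_sort N (e : {set 'I_N}) : #|e| = 3 ->
  exists a b c : 'I_N, [/\ a < b, b < c & e = [set a; b; c]].
Proof.
move=> e3.
have [x xe] : exists x, x \in e by apply/card_gt0P; rewrite e3.
have := cardsD1 x e; rewrite xe e3 /= => H.
have : #|e :\ x| == 2 by apply/eqP; move: H; rewrite add1n; case. 
move=> /cards2P [y [z [yz Ey]]].
have ye : y \in e :\ x by rewrite Ey !inE eqxx.
have ze : z \in e :\ x by rewrite Ey !inE eqxx orbT.
move: ye ze; rewrite !inE => /andP[yx _] /andP[zx _].
have -> : e = [set x; y; z].
  by rewrite -setUA -Ey setD1K.
apply: sort3 => //; by rewrite eq_sym.
Qed.

Lemma triple_uniq N (a b c a' b' c' : 'I_N) :
  a < b -> b < c -> a' < b' -> b' < c' ->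
  [set a; b; c] = [set a'; b'; c'] -> [/\ a = a', b = b' & c = c'].
Proof.
move=> ab bc ab' bc' E.
have m1 : a \in [set a'; b'; c'] by rewrite -E !inE eqxx.
have m2 : b \in [set a'; b'; c'] by rewrite -E !inE eqxx orbT.
have m3 : c \in [set a'; b'; c'] by rewrite -E !inE eqxx !orbT.
have m4 : a' \in [set a; b; c] by rewrite E !inE eqxx.
have m5 : b' \in [set a; b; c] by rewrite E !inE eqxx orbT.
have m6 : c' \in [set a; b; c] by rewrite E !inE eqxx !orbT.
move: m1 m2 m3 m4 m5 m6; rewrite !inE -!val_eqE /=.
move=> h1 h2 h3 h4 h5 h6.
have e1 : nat_of_ord a = a' by lia.
have e3 : nat_of_ord c = c' by lia.
have e2 : nat_of_ord b = b' by lia.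
by split; apply: ord_inj.
Qed.

Lemma pair_sort N (e : {set 'I_N}) : #|e| = 2 ->
  exists a b : 'I_N, a < b /\ e = [set a; b].
Proof.
move=> /eqP /cards2P [x [y [xy ->]]].
case: (ltngtP x y) => [lxy|lyx|exy]; last by rewrite (ord_inj exy) eqxx in xy.
  by exists x, y.
by exists y, x; split => //; rewrite setUC.
Qed.

Lemma pair_uniq N (a b a' b' : 'I_N) :
  a < b -> a' < b' -> [set a; b] = [set a'; b'] -> a = a' /\ b = b'.
Proof.
move=> ab ab' E.
have m1 : a \in [set a'; b'] by rewrite -E !inE eqxx.
have m2 : b \in [set a'; b'] by rewrite -E !inE eqxx orbT.
have m4 : a' \in [set a; b] by rewrite E !inE eqxx.
have m5 : b' \in [set a; b] by rewrite E !inE eqxx orbT.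
move: m1 m2 m4 m5; rewrite !inE -!val_eqE /= => h1 h2 h3 h4.
have e1 : nat_of_ord a = a' by lia.
have e2 : nat_of_ord b = b' by lia.
by split; apply: ord_inj.
Qed.

Lemma subset_card (T : finType) (A : {set T}) k : k <= #|A| ->
  exists B : {set T}, B \subset A /\ #|B| = k.
Proof.
elim: k => [|k IH] kA; first by exists set0; rewrite sub0set cards0.
have [B [BA Bk]] := IH (ltnW kA).
have : ~~ (A \subset B).
  apply/negP => AB; have := subset_leq_card AB; rewrite Bk; lia.
case/subsetPn => x xA xB.
exists (x |: B); split; first by rewrite subUset sub1set xA BA.
by rewrite cardsU1 xB Bk.
Qed.

Lemma img_triple (T : finType) N (iota : 'I_N -> T) (A : {set 'I_N}) (e : {set T}) :
  injective iota -> e \subset iota @: A -> #|e| = 3 ->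
  exists i j k : 'I_N, [/\ i < j, j < k, [&& i \in A, j \in A & k \in A] &
                    e = [set iota i; iota j; iota k]].
Proof.
move=> inj eA e3.
set e' := [set i in A | iota i \in e].
have Ee : e = iota @: e'.
  apply/setP => w; apply/idP/imsetP => [we | [i]].
    have := subsetP eA w we; case/imsetP => i iA wi.
    by exists i => //; rewrite inE iA -wi we.
  by rewrite inE => /andP[_ ie] ->.
have : #|e'| = 3 by rewrite -e3 Ee card_imset.
case/triple_sort => i [j [k [ij jk E']]].
have sub : e' \subset A by apply/subsetP => x; rewrite inE => /andP[].
exists i, j, k; split => //.
  by rewrite !(subsetP sub) // E' !inE eqxx ?orbT.
by rewrite Ee E' !imsetU !imset_set1.
Qed.

Lemma has_K_mono n k r (E : {set {set 'I_n}}) (W W' : {set 'I_n}) :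
  W \subset W' -> has_K k r E W -> has_K k r E W'.
Proof.
move=> WW' /existsP [X /and3P [XW Xr XE]].
apply/existsP; exists X; rewrite Xr XE (subset_trans XW WW') //.
Qed.


Section Hyp.
Variables (n r : nat) (chi : {ffun 'I_n * 'I_n -> 'I_r.+1}).

Definition HE : {set {set 'I_n}} :=
  [set e | [exists a : 'I_n, exists b : 'I_n, exists c : 'I_n,
     [&& a < b, b < c, e == [set a; b; c] & chi (a, b) != chi (a, c)]]].

Lemma HE_uniform : uniform 3 HE.
Proof.
apply/forall_inP => e; rewrite inE => /existsP [a /existsP [b /existsP [c]]].
case/and4P => ab bc /eqP -> _; apply/eqP; apply: card3; rewrite -val_eqE /=; lia.
Qed.

Lemma HE_mem (a b c : 'I_n) : a < b -> b < c ->
  ([set a; b; c] \in HE) = (chi (a, b) != chi (a, c)).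
Proof.
move=> ab bc; rewrite inE; apply/existsP/idP => [[a' /existsP [b' /existsP [c']]] | H].
  case/and4P => ab' bc' /eqP E ne.
  by have [-> -> ->] := triple_uniq ab bc ab' bc' E.
by exists a; apply/existsP; exists b; apply/existsP; exists c; rewrite ab bc eqxx H.
Qed.

Lemma HE_free t : r.+2 < t -> ~~ has_K 3 t HE setT.
Proof.
move=> rt; apply/negP => /existsP [X /and3P [_ /eqP Xt Xc]].
have [x0 x0X] : exists x0, x0 \in X by apply/card_gt0P; rewrite Xt; lia.
case: (arg_minnP (fun x : 'I_n => nat_of_ord x) x0X) => a aX amin.
set Y := X :\ a.
have aX' : a \in X := aX.
have Yc : #|Y| = t.-1 by have := cardsD1 a X; rewrite Xt aX' /= => ->.
pose g := fun y : 'I_n => chi (a, y).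
have : ~~ [forall y1 in Y, forall y2 in Y, (g y1 == g y2) ==> (y1 == y2)].
  apply/negP => Hinj.
  have : {in Y &, injective g}.
    move=> y1 y2 y1Y y2Y e.
    by move/forall_inP: Hinj => /(_ y1 y1Y) /forall_inP /(_ y2 y2Y); rewrite e eqxx => /eqP.
  move/card_in_imset => C.
  have := max_card (g @: Y); rewrite C card_ord Yc; lia.
case/forall_inPn => y1 y1Y /forall_inPn [y2 y2Y]; rewrite negb_imply => /andP [/eqP ge ne].
have key : forall z1 z2, z1 \in Y -> z2 \in Y -> z1 < z2 -> g z1 != g z2.
  move=> z1 z2 z1Y z2Y z12.
  move: z1Y z2Y; rewrite !inE => /andP [z1a z1X] /andP [z2a z2X].
  have az1 : a < z1.
    have := amin z1 z1X; rewrite leq_eqVlt => /orP [/eqP E|] //.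
    by move: z1a; rewrite -val_eqE /= E eqxx.
  rewrite -(HE_mem az1 z12).
  move/forallP: Xc => /(_ [set a; z1; z2]); rewrite card3; first last.
  - by rewrite -val_eqE /=; lia.
  - by rewrite -val_eqE /=; lia.
  - by rewrite -val_eqE /=; lia.
  rewrite eqxx andbT => /implyP; apply.
  by apply/subsetP => w; rewrite !inE => /orP [/orP [] |] /eqP ->.
case: (ltngtP y1 y2) => [l|l|e].
- by move: (key _ _ y1Y y2Y l); rewrite ge eqxx.
- by move: (key _ _ y2Y y1Y l); rewrite ge eqxx.
- by move: ne; rewrite (ord_inj e) eqxx.
Qed.

End Hyp.


Lemma lin_inj (a b a' b' i j : nat) : a*i+b = a'*i+b' -> a*j+b=a'*j+b' -> i<j -> a = a'.
Proof.
move=> h1 h2 ij.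
have h3 : a * (j - i) = a' * (j - i) by rewrite !mulnBr; lia.
by move/eqP: h3; rewrite eqn_pmul2r ?subn_gt0 // => /eqP.
Qed.

Lemma small_y (K s a b i : nat) : a < K -> b < K -> i < s -> a * i + b < K * s.
Proof. move=> aK bK hi. nia. Qed.

Lemma pt_eq (K s a b a' b' i i' : nat) : a < K -> b < K -> a' < K -> b' < K ->
  i < s -> i' < s ->
  i * (K * s) + (a * i + b) = i' * (K * s) + (a' * i' + b') ->
  i = i' /\ a * i + b = a' * i' + b'.
Proof.
move=> aK bK aK' bK' hi hi' E.
have y1 := small_y aK bK hi. have y2 := small_y aK' bK' hi'.
have Q0 : 0 < K * s by lia.
have e1 : (i * (K * s) + (a * i + b)) %/ (K * s) = i by rewrite divnMDl // divn_small // addn0.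
have e2 : (i' * (K * s) + (a' * i' + b')) %/ (K * s) = i' by rewrite divnMDl // divn_small // addn0.
have ii : i = i' by rewrite -e1 -e2 E.
by split => //; move: E; rewrite ii => /addnI.
Qed.

Lemma col_neq r (i j k : nat) : i < r.+2 -> j < r.+2 -> k < r.+2 ->
  i != j -> i != k -> j != k ->
  (inord (j - (i < j)) : 'I_r.+1) != inord (k - (i < k)).
Proof.
move=> hi hj hk ij ik jk; rewrite -val_eqE /=.
case: (ltnP i j) => h1; case: (ltnP i k) => h2 /=;
  rewrite !inordK; lia.
Qed.

Section Lines.
Variables (n r K : nat) (u : nat -> 'I_n).
Let s := r.+2.
Let M := s * (K * s).
Hypothesis u_inj : forall k k', k < M -> k' < M -> u k = u k' -> k = k'.

Definition pt (l : 'I_K * 'I_K) (i : 'I_s) : nat := i * (K * s) + (l.1 * i + l.2).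

Lemma pt_lt l i : pt l i < M.
Proof.
rewrite /pt /M; have := small_y (ltn_ord l.1) (ltn_ord l.2) (ltn_ord i).
have := ltn_ord i; nia.
Qed.

Definition vt l i := u (pt l i).

Lemma vt_inj l : injective (vt l).
Proof.
move=> i i' /u_inj E; have := E (pt_lt l i) (pt_lt l i').
case/(pt_eq (ltn_ord l.1) (ltn_ord l.2) (ltn_ord l.1) (ltn_ord l.2) (ltn_ord i) (ltn_ord i')) => ii _.
exact: ord_inj.
Qed.

Definition blockD l : {set 'I_n * 'I_n} :=
  [set xy | [exists i : 'I_s, exists j : 'I_s,
     [&& i != j, xy == (vt l i, vt l j) & vt l i < vt l j]]].

Definition idx l (x : 'I_n) : nat :=
  if [pick i : 'I_s | vt l i == x] is Some i then val i else 0.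

Lemma idx_vt l i : idx l (vt l i) = i.
Proof.
rewrite /idx; case: pickP => [j /eqP /vt_inj -> //|].
by move/(_ i); rewrite eqxx.
Qed.

Definition target l : {ffun 'I_n * 'I_n -> 'I_r.+1} :=
  [ffun xy => inord (idx l xy.2 - (idx l xy.1 < idx l xy.2))].

Lemma blockD_card l : #|blockD l| <= s * s.
Proof.
have sub : blockD l \subset [set (vt l p.1, vt l p.2) | p : 'I_s * 'I_s].
  apply/subsetP => xy; rewrite inE => /existsP [i /existsP [j /and3P [_ /eqP -> _]]].
  by apply/imsetP; exists (i, j).
apply: leq_trans (subset_leq_card sub) _.
by apply: leq_trans (leq_imset_card _ _) _; rewrite card_prod card_ord.
Qed.

Lemma blockD_disj l l' : l != l' -> [disjoint blockD l & blockD l'].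
Proof.
case: l => a b; case: l' => a' b' ll; rewrite disjoints_subset; apply/subsetP => xy.
rewrite !inE => /existsP [i /existsP [j /and3P [ij /eqP E _]]].
apply/negP => /existsP [i' /existsP [j' /and3P [_ /eqP E' _]]].
move: E'; rewrite E => -[/u_inj e1 /u_inj e2].
have := e1 (pt_lt _ _) (pt_lt _ _); have := e2 (pt_lt _ _) (pt_lt _ _).
rewrite /pt /=.
move=> /(pt_eq (ltn_ord a) (ltn_ord b) (ltn_ord a') (ltn_ord b') (ltn_ord j) (ltn_ord j')) [jj f2].
move=> /(pt_eq (ltn_ord a) (ltn_ord b) (ltn_ord a') (ltn_ord b') (ltn_ord i) (ltn_ord i')) [ii f1].
rewrite -jj in f2; rewrite -ii in f1.
have ij' : nat_of_ord i != j by [].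
have aa : nat_of_ord a = a'.
  case: (ltngtP i j) => h; first exact: lin_inj f1 f2 h.
    exact: lin_inj f2 f1 h.
  by rewrite h eqxx in ij'.
have bb : nat_of_ord b = b' by move: f1; rewrite aa => /addnI.
by move: ll; rewrite (ord_inj aa) (ord_inj bb) eqxx.
Qed.

Variables (chi : {ffun 'I_n * 'I_n -> 'I_r.+1}) (W : {set 'I_n}).
Hypothesis uW : forall k, k < M -> u k \in W.

Lemma clique_of_agree l : agree (blockD l) (target l) chi -> has_K 3 s (HE chi) W.
Proof.
move=> /forall_inP Ag.
apply/existsP; exists [set vt l i | i : 'I_s].
rewrite card_imset; last exact: vt_inj.
rewrite card_ord eqxx /=; apply/andP; split.
  by apply/subsetP => x /imsetP [i _ ->]; apply: uW; apply: pt_lt.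
apply/forallP => e; apply/implyP => /andP [eX /eqP e3].
have [a [b [c [ab bc Ee]]]] := triple_sort e3.
rewrite Ee HE_mem //.
have inX : forall x, x \in e -> exists i, x = vt l i.
  by move=> x xe; have := subsetP eX x xe; case/imsetP => i _ ->; exists i.
have [i ai] : exists i, a = vt l i by apply: inX; rewrite Ee !inE eqxx.
have [j bj] : exists i, b = vt l i by apply: inX; rewrite Ee !inE eqxx orbT.
have [k ck] : exists i, c = vt l i by apply: inX; rewrite Ee !inE eqxx !orbT.
have ne : forall p q : 'I_s, vt l p < vt l q -> p != q.
  by move=> p q pq; apply/eqP => E; rewrite E ltnn in pq.
have ij : i != j by apply: ne; rewrite -ai -bj.
have jk : j != k by apply: ne; rewrite -bj -ck.
have ik : i != k by apply: ne; rewrite -ai -ck; apply: ltn_trans bc.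
have inB : forall p q : 'I_s, p != q -> vt l p < vt l q -> chi (vt l p, vt l q) = target l (vt l p, vt l q).
  move=> p q pq lpq; apply/eqP; apply: Ag; rewrite inE.
  by apply/existsP; exists p; apply/existsP; exists q; rewrite pq eqxx lpq.
have l1 : vt l i < vt l j by rewrite -ai -bj.
have l2 : vt l i < vt l k by rewrite -ai -ck; apply: ltn_trans bc.
rewrite ai bj ck (inB _ _ ij l1) (inB _ _ ik l2) !ffunE /= !idx_vt.
by apply: col_neq => //; rewrite ?ltn_ord.
Qed.

Lemma noK_avoid : ~~ has_K 3 s (HE chi) W ->
  all (fun l => ~~ agree (blockD l) (target l) chi) (enum [set: 'I_K * 'I_K]).
Proof.
move=> H; apply/allP => l _; apply/negP => A.
by move: H; rewrite (clique_of_agree A).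
Qed.

End Lines.


Section Union.
Variables (n r K : nat).
Let s := r.+2.
Let M := s * (K * s).
Let Q := r.+1 ^ (s * s).

Lemma countW (W : {set 'I_n}) : #|W| = M ->
  #|[pred chi : {ffun 'I_n * 'I_n -> 'I_r.+1} | ~~ has_K 3 s (HE chi) W]| * Q ^ (K * K)
    <= Q.-1 ^ (K * K) * r.+1 ^ (n * n).
Proof.
move=> WM.
case E: (enum W) => [|x0 rest].
  have W0 : #|W| = 0 by rewrite cardE E.
  have K0 : K = 0 by move: WM; rewrite W0 /M /s; nia.
  rewrite K0.
  rewrite !muln0 !expn0 !muln1 mul1n.
  have := max_card [pred chi : {ffun 'I_n * 'I_n -> 'I_r.+1} | ~~ has_K 3 s (HE chi) W].
  by rewrite card_ffun card_prod !card_ord.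
pose u := fun k => nth x0 (enum W) k.
have sz : size (enum W) = M by rewrite -cardE.
have u_inj : forall k k', k < M -> k' < M -> u k = u k' -> k = k'.
  move=> k k' hk hk' /eqP; rewrite /u nth_uniq ?sz ?enum_uniq // => /eqP.
  done.
have uW : forall k, k < M -> u k \in W.
  by move=> k hk; rewrite /u -mem_enum mem_nth // sz.
have sub : [pred chi : {ffun 'I_n * 'I_n -> 'I_r.+1} | ~~ has_K 3 s (HE chi) W]
  \subset [pred chi | all (fun l => ~~ agree (blockD r u l) (target r u l) chi)
                          (enum [set: 'I_K * 'I_K])].
  apply/subsetP => chi; rewrite !inE => H.
  exact: (noK_avoid u_inj uW H).
apply: leq_trans (leq_mul (subset_leq_card sub) (leqnn _)) _.
have := @avoid_count _ _ _ (enum [set: 'I_K * 'I_K]) (blockD r u) (target r u) (s * s).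
rewrite card_ord /= => /(_ isT (enum_uniq _)).
rewrite -cardE cardsT card_prod card_ord card_prod card_ord.
apply.
  move=> l l' _ _; exact: blockD_disj u_inj l l'.
move=> l; exact: (blockD_card r u l).
Qed.

Lemma exists_good : 'C(n, M) * Q.-1 ^ (K * K) < Q ^ (K * K) ->
  exists chi : {ffun 'I_n * 'I_n -> 'I_r.+1},
    forall W : {set 'I_n}, #|W| = M -> has_K 3 s (HE chi) W.
Proof.
move=> Hlt.
set Bad := [pred chi : {ffun 'I_n * 'I_n -> 'I_r.+1} |
  [exists W : {set 'I_n}, (#|W| == M) && ~~ has_K 3 s (HE chi) W]].
set F := fun (W : {set 'I_n}) (chi : {ffun 'I_n * 'I_n -> 'I_r.+1}) =>
  ((#|W| == M) && ~~ has_K 3 s (HE chi) W : nat).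
have B1 : #|Bad| <= \sum_(W : {set 'I_n} | #|W| == M)
      #|[pred chi : {ffun 'I_n * 'I_n -> 'I_r.+1} | ~~ has_K 3 s (HE chi) W]|.
  have e1 : forall W : {set 'I_n}, #|W| == M ->
     #|[pred chi : {ffun 'I_n * 'I_n -> 'I_r.+1} | ~~ has_K 3 s (HE chi) W]|
       = \sum_chi F W chi.
    move=> W WM; rewrite -sum1_card big_mkcond /=; apply: eq_bigr => chi _.
    by rewrite /F WM inE; case: (has_K _ _ _ _).
  rewrite (eq_bigr _ e1) exchange_big /= -sum1_card big_mkcond /=.
  apply: leq_sum => chi _; rewrite inE.
  case: existsP => // [[W /andP [WM nK]]].
  rewrite (bigD1 W) //= /F WM nK; exact: leq_addr.
have B2 : #|Bad| * Q ^ (K * K) <= 'C(n, M) * Q.-1 ^ (K * K) * r.+1 ^ (n * n).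
  apply: leq_trans (leq_mul B1 (leqnn _)) _.
  rewrite big_distrl /=.
  apply: (@leq_trans (\sum_(W : {set 'I_n} | #|W| == M) (Q.-1 ^ (K*K) * r.+1^(n*n)))).
    by apply: leq_sum => W WM; exact: countW (eqP WM).
  rewrite big_const iter_addn_0.
  have -> : #|[pred W : {set 'I_n} | #|W| == M]| = 'C(n, M).
    have := card_draws ('I_n) M; rewrite card_ord => <-.
    by apply: eq_card => W; rewrite !inE.
  by rewrite mulnC mulnA.
have B3 : #|Bad| < r.+1 ^ (n * n).
  have P0 : 0 < r.+1 ^ (n * n) by rewrite expn_gt0.
  have Q0 : 0 < Q ^ (K * K) by rewrite expn_gt0 expn_gt0.
  have : #|Bad| * Q ^ (K * K) < r.+1 ^ (n * n) * Q ^ (K * K).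
    apply: leq_ltn_trans B2 _; rewrite mulnC ltn_pmul2l //.
  by rewrite ltn_pmul2r.
have : ~~ [forall chi, chi \in Bad].
  apply/negP => /forallP H.
  have : #|{ffun 'I_n * 'I_n -> 'I_r.+1}| <= #|Bad|.
    by apply: subset_leq_card; apply/subsetP => chi _; exact: H chi.
  move: B3; rewrite card_ffun card_prod !card_ord; lia.
case/forallPn => chi chiB; exists chi => W WM.
case hK: (has_K 3 s (HE chi) W) => //; case/negP: chiB; rewrite inE.
by apply/existsP; exists W; rewrite WM eqxx hK.
Qed.
End Union.


Lemma bigmin_le (I : finType) (P : pred I) (F : I -> nat) x0 j :
  P j -> \big[minn/x0]_(i | P i) F i <= F j.
Proof.
move=> Pj; rewrite -big_filter.
have : j \in [seq i <- index_enum I | P i] by rewrite mem_filter Pj /index_enum -enumT mem_enum.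
elim: [seq i <- index_enum I | P i] => [|a l IH] //.
rewrite inE big_cons => /orP [/eqP <-|jl]; first exact: geq_minl.
by apply: leq_trans (geq_minr _ _) (IH jl).
Qed.

Lemma le_bigmin (I : finType) (P : pred I) (F : I -> nat) x0 x :
  x <= x0 -> (forall i, P i -> x <= F i) -> x <= \big[minn/x0]_(i | P i) F i.
Proof.
move=> h0 hF; apply: (big_ind (fun y => x <= y)) => //.
by move=> a b ha hb; rewrite leq_min ha hb.
Qed.

Lemma f_le_of k s t n (E : {set {set 'I_n}}) :
  uniform k E -> ~~ has_K k t E setT -> f k s t n <= indep_num k s E.
Proof. by move=> U H; rewrite /f; apply: bigmin_le; rewrite U H. Qed.

Lemma upper_nat r t n K : r.+2 < t ->
  'C(n, r.+2 * (K * r.+2)) * (r.+1 ^ (r.+2 * r.+2)).-1 ^ (K * K) <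
     (r.+1 ^ (r.+2 * r.+2)) ^ (K * K) ->
  f 3 r.+2 t n <= r.+2 * (K * r.+2).
Proof.
move=> rt H.
have [chi Hchi] := exists_good H.
apply: leq_trans (f_le_of _ (HE_uniform chi) (HE_free chi rt)) _.
apply/bigmax_leqP => W nK; rewrite leqNgt; apply/negP => lt.
have [W' [W'W W'c]] := subset_card (ltnW lt).
by move/negP: nK; apply; apply: has_K_mono W'W (Hchi _ W'c).
Qed.


Lemma pigeon (T : finType) (A : {set T}) (j : nat) (sig : T -> {ffun 'I_j -> bool}) :
  exists s0, #|A| <= #|[set x in A | sig x == s0]| * 2 ^ j.
Proof.
have h0 : 0 < #|{ffun 'I_j -> bool}| by rewrite card_ffun expn_gt0 card_bool.
have [s0 Hs0] := eq_bigmax (fun s0 => #|[set x in A | sig x == s0]|) h0.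
exists s0; rewrite -Hs0.
rewrite -sum1_card (partition_big sig predT) //=.
apply: (@leq_trans (\sum_(s1 : {ffun 'I_j -> bool}) \max_s2 #|[set x in A | sig x == s2]|)).
  apply: leq_sum => s1 _; rewrite sum1_card.
  apply: leq_trans (leq_bigmax s1); apply: subset_leq_card.
  by apply/subsetP => x; rewrite !inE.
by rewrite sum_nat_const card_ffun card_bool card_ord mulnC.
Qed.

Section ER.
Variables (n : nat) (H : {set {set 'I_n}}).
Definition edgeH (x y z : 'I_n) := [set x; y; z] \in H.

Definition Inv j (v : nat -> 'I_n) (S : {set 'I_n}) (c : nat -> nat -> bool) :=
  [/\ (forall i k, i < k -> k < j -> v i != v k),
      (forall k, k < j -> v k \notin S),
      (forall i i' k, i < i' -> i' < k -> k < j -> edgeH (v i) (v i') (v k) = c i i'),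
      (forall x, x \in S -> forall i i', i < i' -> i' < j -> edgeH (v i) (v i') x = c i i')
    & n.+1 <= #|S|.+1 * 2 ^ 'C(j.+1, 2)].

Lemma ER_exists (x00 : 'I_n) j : 2 ^ 'C(j, 2) <= n -> exists v S c, Inv j v S c.
Proof.
elim: j => [|j IH] hj.
  exists (fun _ => x00), setT, (fun _ _ => false); split => //; try lia.
  by rewrite cardsT card_ord bin_small // expn0 muln1.
have hj' : 2 ^ 'C(j, 2) <= n.
  apply: leq_trans hj; rewrite leq_exp2l //; apply: leq_bin2l; exact: leqnSn.
have [v [S [c [I1 I2 I3 I4 I5]]]] := IH hj'.
have S0 : 0 < #|S|.
  rewrite lt0n; apply/negP => /eqP S0; move: I5; rewrite S0 mul1n => I5.
  by have := leq_trans I5 hj; rewrite ltnn.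
have [x0 x0S] : exists x0, x0 \in S by apply/card_gt0P.
pose sig := fun x => [ffun o : 'I_j => edgeH (v o) x0 x].
have [s0 Hs0] := pigeon (S :\ x0) sig.
set S' := [set x in S :\ x0 | sig x == s0] in Hs0.
pose v' := fun k => if k == j then x0 else v k.
pose c' := fun i i' => if i' == j then [exists o : 'I_j, (val o == i) && s0 o] else c i i'.
have look : forall i (hi : i < j), [exists o : 'I_j, (val o == i) && s0 o] = s0 (Ordinal hi).
  move=> i hi; apply/existsP/idP => [[o /andP [/eqP oi so]]|so].
    by rewrite (_ : Ordinal hi = o) //; apply: ord_inj.
  by exists (Ordinal hi); rewrite eqxx.
exists v', S', c'; split.
- move=> i k ik kj; rewrite /v'.
  have -> : (i == j) = false by apply/negbTE; rewrite neq_ltn; apply/orP; left; lia.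
  case: (k =P j) => [_|/eqP kj'].
    by apply/eqP => E; move: (I2 i (ltac:(lia))); rewrite E x0S.
  by apply: I1 => //; lia.
- move=> k kj; rewrite /v' !inE negb_and.
  case: (k =P j) => [_|/eqP kj']; first by rewrite eqxx.
  have := I2 k (ltac:(lia)); rewrite negb_and => ->; by rewrite orbT.
- move=> i i' k ii' i'k kj; rewrite /c' /v'.
  have -> : (i == j) = false by apply/negbTE; lia.
  have -> : (i' == j) = false by apply/negbTE; lia.
  case: (k =P j) => [_|/eqP kj']; first by apply: I4 => //; lia.
  by apply: I3 => //; lia.
- move=> x; rewrite !inE => /andP [/andP [xx0 xS] /eqP sx] i i' ii' i'j.
  rewrite /c' /v'.
  have -> : (i == j) = false by apply/negbTE; lia.
  case: (i' =P j) => [E|/eqP i'j'].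
    have hi : i < j by lia.
    rewrite look.
    have := congr1 (fun g : {ffun 'I_j -> bool} => g (Ordinal hi)) sx; rewrite /sig ffunE /= => <-.
    by [].
  by apply: I4 => //; lia.
- have e1 : #|S| = #|S :\ x0|.+1 by rewrite (cardsD1 x0 S) x0S.
  rewrite binS bin1 expnD.
  have p0 : 0 < 2 ^ j by rewrite expn_gt0.
  have hh : #|S|.+1 <= #|S'|.+1 * 2 ^ j.+1 by rewrite expnS; nia.
  apply: leq_trans I5 _.
  by rewrite (mulnC (2 ^ 'C(j.+1, 2))) mulnA leq_mul2r hh orbT.
Qed.
End ER.


Lemma preimage_img (T : finType) N (iota : 'I_N -> T) (A : {set 'I_N}) (X : {set T}) :
  injective iota -> X \subset iota @: A ->
  exists X' : {set 'I_N}, [/\ X' \subset A, X = iota @: X' & #|X'| = #|X|].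
Proof.
move=> inj XA.
set X' := [set i in A | iota i \in X].
have EX : X = iota @: X'.
  apply/setP => w; apply/idP/imsetP => [we | [i]].
    have := subsetP XA w we; case/imsetP => i iA wi.
    by exists i => //; rewrite inE iA -wi we.
  by rewrite inE => /andP[_ ie] ->.
exists X'; split => //; first by apply/subsetP => x; rewrite inE => /andP[].
by rewrite EX card_imset.
Qed.

Section Graph.
Variables (n m : nat) (H : {set {set 'I_n}}) (v : nat -> 'I_n) (c : nat -> nat -> bool).
Hypothesis I1 : forall i k, i < k -> k < m.+1 -> v i != v k.
Hypothesis I3 : forall i i' k, i < i' -> i' < k -> k < m.+1 -> edgeH H (v i) (v i') (v k) = c i i'.

Definition vmap (k : 'I_m.+1) : 'I_n := v k.
Definition wid (k : 'I_m) : 'I_m.+1 := widen_ord (leqnSn m) k.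
Definition plus (Z : {set 'I_m}) : {set 'I_m.+1} := ord_max |: wid @: Z.

Lemma iota_inj : injective vmap.
Proof.
move=> i k E; apply/eqP; apply/negPn/negP => ne.
case: (ltngtP i k) => h.
- by move: (I1 h (ltn_ord k)); rewrite /vmap in E; rewrite E eqxx.
- by move: (I1 h (ltn_ord i)); rewrite /vmap in E; rewrite E eqxx.
- by move: ne; rewrite (ord_inj h) eqxx.
Qed.

Lemma wid_inj : injective wid.
Proof. by move=> i k /(congr1 val) /= /ord_inj. Qed.

Lemma card_plus Z : #|vmap @: plus Z| = #|Z|.+1.
Proof.
rewrite card_imset; last exact: iota_inj.
rewrite cardsU1 card_imset; last exact: wid_inj.
have nm : ord_max \notin wid @: Z.
  apply/imsetP => -[z _ /(congr1 val)] /=; have := ltn_ord z; lia.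
by rewrite nm.
Qed.

Lemma plus_small Z (x : 'I_m.+1) : x \in plus Z -> x < m -> exists2 z, z \in Z & x = wid z.
Proof.
rewrite /plus !inE => /orP [/eqP E|]; first by rewrite E /= ltnn.
by case/imsetP => z zZ ->; exists z.
Qed.

Definition G : {set {set 'I_m}} :=
  [set e | [exists i : 'I_m, exists i' : 'I_m, [&& i < i', e == [set i; i'] & c i i']]].

Lemma G_uniform : uniform 2 G.
Proof.
apply/forall_inP => e; rewrite inE => /existsP [i /existsP [i' /and3P [ii /eqP -> _]]].
rewrite cards2; case: (i =P i') => // E; by rewrite E ltnn in ii.
Qed.

Lemma G_mem (i i' : 'I_m) : i < i' -> ([set i; i'] \in G) = c i i'.
Proof.
move=> ii; rewrite inE; apply/existsP/idP => [[a /existsP [b /and3P [ab /eqP E ca]]]|ci].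
  by have [-> ->] := pair_uniq ii ab E.
by exists i; apply/existsP; exists i'; rewrite ii eqxx ci.
Qed.

Lemma H_trip (i j k : 'I_m.+1) : i < j -> j < k ->
  ([set vmap i; vmap j; vmap k] \in H) = c i j.
Proof. by move=> ij jk; rewrite -(I3 ij jk (ltn_ord k)). Qed.

Lemma clique_lift t : has_K 2 t G setT -> has_K 3 t.+1 H setT.
Proof.
case/existsP => Y /and3P [_ /eqP Yt Yc].
apply/existsP; exists (vmap @: plus Y); rewrite subsetT card_plus Yt eqxx /=.
apply/forallP => e; apply/implyP => /andP [eX /eqP e3].
have [i [j [k [ij jk /and3P [iY jY kY] ->]]]] := img_triple iota_inj eX e3.
rewrite H_trip //.
have [i0 i0Y Ei] := plus_small iY (ltac:(have := ltn_ord k; lia)).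
have [j0 j0Y Ej] := plus_small jY (ltac:(have := ltn_ord k; lia)).
rewrite Ei Ej.
have -> : c (wid i0) (wid j0) = c i0 j0 by [].
have ij0 : i0 < j0 by move: ij; rewrite Ei Ej.
rewrite -G_mem //.
move/forallP: Yc => /(_ [set i0; j0]) /implyP; apply.
rewrite cards2; apply/andP; split.
  by apply/subsetP => x; rewrite !inE => /orP [] /eqP ->.
by case: (i0 =P j0) => // E; rewrite E ltnn in ij0.
Qed.

Lemma noK_lift s Z : 2 <= s -> has_K 3 s H (vmap @: plus Z) -> has_K 2 s.-1 G Z.
Proof.
move=> s2 /existsP [X /and3P [XZ /eqP Xs Xc]].
have [X' [X'P EX X'c]] := preimage_img iota_inj XZ.
rewrite Xs in X'c.
have [x0 x0X'] : exists x0, x0 \in X' by apply/card_gt0P; lia.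
case: (arg_maxnP (fun x : 'I_m.+1 => nat_of_ord x) x0X') => k kX' kmax.
have kX : k \in X' := kX'.
have lowk : forall x, x \in X' :\ k -> x < k.
  move=> x; rewrite !inE => /andP [xk xX].
  have h : x <= k := kmax x xX; move: h; rewrite leq_eqVlt => /orP [/eqP E|] //.
  by move: xk; rewrite (ord_inj E) eqxx.
set Y' := [set i0 : 'I_m | wid i0 \in X' :\ k].
have EY : wid @: Y' = X' :\ k.
  apply/setP => x; apply/imsetP/idP => [[i0]|xX].
    by rewrite inE => h ->.
  have xm : x < m by have := lowk x xX; have := ltn_ord k; lia.
  have E : wid (Ordinal xm) = x by apply: ord_inj.
  by exists (Ordinal xm); rewrite // inE E.
have Y'c : #|Y'| = s.-1.
  have := cardsD1 k X'; rewrite kX X'c -EY card_imset; last exact: wid_inj.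
  move=> h; lia.
apply/existsP; exists Y'; rewrite Y'c eqxx /=; apply/andP; split.
  apply/subsetP => i0; rewrite inE => h.
  have h' := h; rewrite inE in h'; case/andP: h' => _ /(subsetP X'P) hp.
  have [z zZ E] := plus_small hp (ltn_ord i0).
  by rewrite (wid_inj E).
apply/forallP => e; apply/implyP => /andP [eY /eqP e2].
have [a [b [ab Ee]]] := pair_sort e2.
rewrite Ee G_mem //.
have aY : a \in Y' by apply: (subsetP eY); rewrite Ee !inE eqxx.
have bY : b \in Y' by apply: (subsetP eY); rewrite Ee !inE eqxx orbT.
move: aY bY; rewrite !inE => aX bX.
have bk : wid b < k.
  by apply: (lowk (wid b)); rewrite !inE; exact: bX.
have ab' : wid a < wid b by [].
rewrite -(@H_trip (wid a) (wid b) k) //.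
move/forallP: Xc => /(_ [set vmap (wid a); vmap (wid b); vmap k]) /implyP; apply.
rewrite card3; first last.
- by apply/negP => /eqP /iota_inj E; rewrite E ltnn in bk.
- by apply/negP => /eqP /iota_inj E; move: (ltn_trans ab' bk); rewrite E ltnn.
- by apply/negP => /eqP /iota_inj /wid_inj E; rewrite E ltnn in ab.
rewrite eqxx andbT EX; apply/subsetP => w; rewrite !inE => /orP [/orP [] |] /eqP ->;
  apply: imset_f.
- by case/andP: aX.
- by case/andP: bX.
- exact: kX.
Qed.

End Graph.


Lemma bin2_ge m : m <= 'C(m.+1, 2).
Proof. by rewrite binS bin1 leq_addl. Qed.

Lemma lower_nat s t n m : 3 <= s -> s < t -> 2 ^ 'C(m.+1, 2) <= n ->
  f 2 s.-1 t.-1 m <= f 3 s t n.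
Proof.
move=> s3 st hn.
have mn : m <= n.
  apply: leq_trans hn; apply: leq_trans (ltnW (ltn_expl m (ltnSn 1))) _.
  by rewrite leq_exp2l // bin2_ge.
have n0 : 0 < n by apply: leq_trans hn; rewrite expn_gt0.
rewrite [f 3 s t n]/f; apply: le_bigmin.
  apply: leq_trans _ mn; rewrite /f.
  apply: (big_ind (fun y => y <= m)) => //.
    by move=> a b ha _; apply: leq_trans (geq_minl _ _) ha.
  move=> G0 _; apply/bigmax_leqP => W _.
  by have := max_card W; rewrite card_ord.
move=> Hs /andP [Hu Hfree].
have [v [S [c [I1 I2 I3 I4 I5]]]] := ER_exists Hs (Ordinal n0) hn.
apply: leq_trans (f_le_of _ (G_uniform m c) _) _.
  apply/negP => /(clique_lift I1 I3).
  have -> : t.-1.+1 = t by lia.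
  by apply/negP.
apply/bigmax_leqP => Z nZ.
have nZ' : ~~ has_K 3 s Hs (@vmap n m v @: plus Z).
  have s2 : 2 <= s by lia.
  apply/negP => /(noK_lift I1 I3 s2) hZ.
  by move/negP: nZ.
apply: (@leq_trans #|@vmap n m v @: plus Z|); first by rewrite card_plus.
exact: (@leq_bigmax_cond _ (fun W => ~~ has_K 3 s Hs W) (fun W => #|W|) _ nZ').
Qed.

From mathcomp Require Import all_classical all_reals all_analysis.
From mathcomp Require Import ring lra zify.
Import Order.TTheory GRing.Theory Num.Theory.
Local Open Scope ring_scope.

Lemma key_ineq (R : realType) (n Q a K : nat) : (2 <= n)%N -> (2 <= Q)%N ->
  (a * Q)%:R * ln (n%:R : R) < K%:R ->
  (n ^ (a * K) * Q.-1 ^ (K * K) < Q ^ (K * K))%N.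
Proof.
move=> n2 Q2 hK.
rewrite -(ltr_nat R) natrM !natrX.
set x : R := n%:R; set q : R := Q%:R.
have x1 : 1 < x by rewrite /x ltr1n.
have q2 : 2 <= q by rewrite /q ler_nat.
have q0 : 0 < q by lra.
have lx : 0 < ln x by apply: ln_gt0.
have K0 : 0 < K%:R :> R.
  apply: le_lt_trans hK; apply: mulr_ge0 => //; exact: ltW.
have eq1 : Q.-1%:R = q - 1 :> R.
  rewrite /q [in RHS](_ : Q = Q.-1 + 1)%N; last by rewrite addn1 prednK // ltnW.
  by rewrite natrD addrK.
rewrite eq1.
have b1 : q - 1 <= q * expR (- q^-1).
  have := expR_ge1Dx (- q^-1).
  have -> : q - 1 = q * (1 + - q^-1) by rewrite mulrDr mulr1 mulrN mulfV ?gt_eqF.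
  move=> h; rewrite ler_wpM2l //; exact: ltW.
have b2 : (q - 1) ^+ (K * K) <= (q * expR (- q^-1)) ^+ (K * K).
  apply: lerXn2r; rewrite ?nnegrE //; [lra|].
  by apply: mulr_ge0; [exact: ltW | exact: expR_ge0].
have ex : x = expR (ln x) by rewrite lnK // posrE; lra.
have h0 : 0 <= x ^+ (a * K) by apply: exprn_ge0; lra.
apply: (le_lt_trans (ler_wpM2l h0 b2)).
rewrite exprMn -expRM_natl {1}ex -expRM_natl mulrCA -expRD.
rewrite -[X in _ < X]mulr1 ltr_pM2l; last by apply: exprn_gt0.
rewrite expR_lt1 !natrM.
move: hK; rewrite natrM /q => hK.
set L := ln x in hK *.
set k : R := K%:R in hK K0 *.
set A : R := a%:R in hK *.
have iq : q * q^-1 = 1 by rewrite mulfV // gt_eqF.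
have h1 : A * q * L * k < k * k by rewrite ltr_pM2r.
have h2 : A * q * L * k * q^-1 < k * k * q^-1 by rewrite ltr_pM2r // invr_gt0.
rewrite (_ : A * q * L * k * q^-1 = A * k * L * (q * q^-1)) in h2; last by ring.
rewrite iq mulr1 in h2.
lra.
Qed.

Lemma ffact_le_exp n m : (n ^_ m <= n ^ m)%N.
Proof.
elim: m n => [|m IH] n; first by rewrite ffactn0 expn0.
rewrite ffactnS expnS leq_mul2l; apply/orP; right.
apply: leq_trans (IH n.-1) _; elim: m {IH} => // m IHm.
by rewrite !expnS leq_mul // leq_pred.
Qed.

Lemma bin_le_exp n m : ('C(n, m) <= n ^ m)%N.
Proof.
apply: leq_trans (ffact_le_exp n m); rewrite -bin_ffact.
by apply: leq_pmulr; exact: fact_gt0.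
Qed.

Lemma bin2_le_sq m : ('C(m.+1, 2) <= m * m)%N.
Proof.
elim: m => [|m IH] //.
rewrite binS bin1; nia.
Qed.

Lemma ln_ge_half (R : realType) (x : R) : 2 <= x -> 1/2 <= ln x.
Proof.
move=> x2.
have x0 : 0 < x by lra.
have := expR_ge1Dx (- ln x); rewrite expRN lnK ?posrE //.
move=> h.
have : x^-1 <= 1/2.
  rewrite -[x^-1]mul1r ler_pdivrMr // mulrC -ler_pdivrMr; [lra|lra].
lra.
Qed.

Theorem theorem1 (R : realType) (s : nat) : (3 <= s)%N ->
  exists C : R, 0 < C /\
    forall (t n : nat), (s < t)%N -> (2 <= n)%N ->
      (f 2 s.-1 t.-1 (Num.truncn (Num.sqrt (ln (n%:R : R)))) <= f 3 s t n)%N /\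
      (f 3 s t n)%:R <= C * ln (n%:R : R).
Proof.
move=> s3.
have [r Er] : exists r, s = r.+2 by exists s.-2; lia.
set Q := (s.-1 ^ (s * s))%N.
exists ((s * s * (s * s * Q) + 2 * (s * s))%:R); split.
  by rewrite ltr0n; apply: ltn_addl; rewrite muln_gt0 /=; lia.
move=> t n st n2.
have x2 : 2 <= (n%:R : R) by rewrite ler_nat.
have lnh := ln_ge_half x2.
have ln0 : 0 <= ln (n%:R : R) by lra.
split.
  apply: lower_nat => //.
  set m := Num.truncn _.
  have hm : (m%:R : R) <= Num.sqrt (ln (n%:R : R)) by rewrite truncn_le sqrtr_ge0.
  have hm2 : ((m * m)%N%:R : R) <= ln (n%:R : R).
    rewrite natrM -(sqr_sqrtr ln0) expr2.
    apply: ler_pM => //; exact: ler0n.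
  apply: (@leq_trans (2 ^ (m * m))); first by rewrite leq_exp2l // bin2_le_sq.
  rewrite -(ler_nat R) natrX.
  apply: (@le_trans _ _ (expR 1 ^+ (m * m))).
    apply: lerXn2r; rewrite ?nnegrE ?ler0n ?expR_ge0 //.
    by have := expR_ge1Dx (1 : R); lra.
  rewrite -expRM_natl mulr1 -[X in _ <= X]lnK ?posrE; last by lra.
  by rewrite ler_expR.
set A : R := (s * s * Q)%:R * ln (n%:R : R).
have A0 : 0 <= A by apply: mulr_ge0 => //; exact: ler0n.
set K := (Num.truncn A).+1.
have hK : A < K%:R by apply: truncnS_gt.
have hK2 : K%:R <= A + 1 by rewrite /K -addn1 natrD lerD2r truncn_le.
have Q2 : (2 <= Q)%N.
  rewrite /Q Er /=; apply: (@leq_trans (r.+1 ^ 1)); first by rewrite expn1; lia.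
  by rewrite leq_exp2l //; lia.
have key := key_ineq (R := R) n2 Q2 hK.
have H1 : (f 3 s t n <= s * (K * s))%N.
  move: st key; rewrite /Q Er /= => st key.
  apply: upper_nat => //.
  apply: leq_ltn_trans _ key; rewrite leq_mul2r; apply/orP; right.
  rewrite (_ : (r.+2 * (K * r.+2) = r.+2 * r.+2 * K)%N); last by nia.
  exact: bin_le_exp.
apply: (@le_trans _ _ (s * (K * s))%:R); first by rewrite ler_nat.
rewrite (_ : (s * (K * s) = s * s * K)%N); last by nia.
rewrite natrM !natrD !natrM.
move: hK2; rewrite /A natrM => hK2.
set S2 : R := (s * s)%:R in hK2 *.
rewrite -!natrM -/S2.
set q : R := Q%:R in hK2 *.
set L := ln _ in hK2 lnh ln0 *.
have S0 : 0 <= S2 by exact: ler0n.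
have : S2 * K%:R <= S2 * (S2 * q * L + 1) by rewrite ler_wpM2l.
nra.
Qed.
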